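(* Let $\Gamma=(V,E)$ be a finite directed graph with $[n]\subseteq V$, let $w:E\to\mathbb{R}$ be edge weights with no directed cycle of negative total weight, and let $S_1\subset\dots\subset S_s$ be subsets of $V$ with $|S_j|=d_j$, $d_1<\dots<d_s$, such that for each $j$ there is some subset of $[n]$ with a linking onto $S_j$. For $I\in\binom{[n]}{d_j}$ let $\mu_j(I)$ be the minimum weight of a linking from $I$ onto $S_j$ ($\infty$ if none exists). Then $(\mu_1,\dots,\mu_s)$ is a valuated flag matroid of rank $(d_1,\dots,d_s)$.
   Context: A linking from $I$ onto $J$ ($|I|=|J|$) is a collection of $|I|$ pairwise vertex-disjoint directed paths (paths of length 0 allowed), each starting at a vertex of $I$ and ending at a vertex of $J$; its weight is the total weight of its edges. A valuated matroid of rank $d$ on $[n]$ is $\mu:\binom{[n]}{d}\to\mathbb{R}\cup\{\infty\}$, not identically $\infty$, such that for all $S\in\binom{[n]}{d-1}$, $T\in\binom{[n]}{d+1}$ the minimum of $\mu(S\cup t)+\mu(T\setminus t)$, $t\in T\setminus S$, is attained at least twice or is $\infty$. A valuated flag matroid of rank $(d_1,\dots,d_s)$ is a tuple of valuated matroids $\mu_j$ of rank $d_j$ such that for all $j<k$, $S\in\binom{[n]}{d_j-1}$, $T\in\binom{[n]}{d_k+1}$, the minimum of $\mu_j(S\cup t)+\mu_k(T\setminus t)$, $t\in T\setminus S$, is attained at least twice or is $\infty$. *)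

(* Defs.v *)
From HB Require Import structures.
From mathcomp Require Import all_boot all_order all_algebra.
From mathcomp Require Import boolp classical_sets reals constructive_ereal ereal.
Set Implicit Arguments. Unset Strict Implicit. Unset Printing Implicit Defensive.
Import Order.TTheory GRing.Theory Num.Theory.
Local Open Scope ring_scope.

Section Graph.
Variables (V E : finType) (src tgt : E -> V).

Fixpoint is_walk (x : V) (es : seq E) : bool :=
  if es is e :: es' then (src e == x) && is_walk (tgt e) es' else true.

Definition walk_verts (x : V) (es : seq E) : seq V := x :: map tgt es.

Definition walk_end (x : V) (es : seq E) : V := last x (map tgt es).

Definition is_path (x : V) (es : seq E) : bool :=
  is_walk x es && uniq (walk_verts x es).

Definition is_cycle (x : V) (es : seq E) : bool :=
  [&& es != [::], is_walk x es, walk_end x es == x & uniq (map tgt es)].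

Variable R : realType.
Variable w : E -> R.

Definition walk_weight (es : seq E) : R := \sum_(e <- es) w e.

Definition no_negative_cycle : Prop :=
  forall x es, is_cycle x es -> 0 <= walk_weight es.

Variables (n : nat) (iota : 'I_n -> V).

(* A linking from I (a subset of [n], embedded in V via iota) onto J:
   for each i in I a path starting at iota i and ending in J, these paths
   being pairwise vertex-disjoint, and |I| = |J|. *)
Definition is_linking (I : {set 'I_n}) (J : {set V}) (P : 'I_n -> seq E) : Prop :=
  [/\ #|I| = #|J|,
      forall i, i \in I -> is_path (iota i) (P i) && (walk_end (iota i) (P i) \in J)
    & forall i i', i \in I -> i' \in I -> i != i' ->
        [disjoint walk_verts (iota i) (P i) & walk_verts (iota i') (P i')]].

Definition linking_weight (I : {set 'I_n}) (P : 'I_n -> seq E) : R :=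
  \sum_(i in I) walk_weight (P i).

Definition has_linking (I : {set 'I_n}) (J : {set V}) : Prop :=
  exists P, is_linking I J P.

(* minimum weight of a linking from I onto J (+oo if there is none);
   the set of weights is finite, so the infimum is a minimum *)
Definition min_linking_weight (I : {set 'I_n}) (J : {set V}) : \bar R :=
  ereal_inf [set (linking_weight I P)%:E | P in [set P | is_linking I J P]].

End Graph.

Section Valuated.
Variables (R : realType) (n : nat).
Local Open Scope ereal_scope.

Definition min_twice_or_infty (A : {set 'I_n}) (f : 'I_n -> \bar R) : Prop :=
  (forall t, t \in A -> f t = +oo) \/
  exists t1 t2, [/\ t1 \in A, t2 \in A, t1 != t2, f t1 = f t2
                  & forall t, t \in A -> f t1 <= f t].

(* mu is only evaluated on d-subsets of [n] below *)
Definition valuated_matroid (d : nat) (mu : {set 'I_n} -> \bar R) : Prop :=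
  (exists I : {set 'I_n}, #|I| = d /\ mu I != +oo) /\
  forall S T : {set 'I_n}, #|S|.+1 = d -> #|T| = d.+1 ->
    min_twice_or_infty (T :\: S) (fun t => mu (t |: S) + mu (T :\ t)).

Definition valuated_flag_matroid (s : nat) (d : 'I_s -> nat)
    (mu : 'I_s -> {set 'I_n} -> \bar R) : Prop :=
  (forall j, valuated_matroid (d j) (mu j)) /\
  forall j k : 'I_s, (j < k)%N ->
  forall S T : {set 'I_n}, #|S|.+1 = d j -> #|T| = (d k).+1 ->
    min_twice_or_infty (T :\: S) (fun t => mu j (t |: S) + mu k (T :\ t)).

End Valuated.

(* Main.v *)
Require Import Defs.
From HB Require Import structures.
From mathcomp Require Import all_boot all_order all_algebra.
From mathcomp Require Import boolp classical_sets reals constructive_ereal ereal.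
From mathcomp Require Import lra zify.
Set Implicit Arguments. Unset Strict Implicit. Unset Printing Implicit Defensive.
Import Order.TTheory GRing.Theory Num.Theory.
Local Open Scope ring_scope.

Lemma uniq_map_inj (T1 T2 : eqType) (f : T1 -> T2) (s : seq T1) :
  uniq (map f s) -> {in s &, injective f}.
Proof.
elim: s => [//|a s IH] /= /andP[Ha Hu] x y; rewrite !inE.
case/orP=> [/eqP->|Hx]; case/orP=> [/eqP->|Hy] //.
- by move=> E; move: Ha; rewrite E (map_f f Hy).
- by move=> E; move: Ha; rewrite -E (map_f f Hx).
- exact: IH.
Qed.

Section Walks.
Variables (V E : finType) (src tgt : E -> V).

Lemma walk_srcs x es : is_walk src tgt x es -> map src es = belast x (map tgt es).
Proof.
elim: es x => [//|e es IH] x /= /andP[/eqP-> H]; by rewrite (IH _ H).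
Qed.

Lemma walk_verts_rcons x es : is_walk src tgt x es ->
  walk_verts tgt x es = rcons (map src es) (walk_end tgt x es).
Proof. by move=> H; rewrite /walk_verts /walk_end (walk_srcs H) -lastI. Qed.

Lemma path_walk x es : is_path src tgt x es -> is_walk src tgt x es.
Proof. by case/andP. Qed.

Lemma path_uniq x es : is_path src tgt x es -> uniq (walk_verts tgt x es).
Proof. by case/andP. Qed.

Lemma path_srcs_uniq x es : is_path src tgt x es -> uniq (map src es).
Proof.
move=> H; have := path_uniq H; rewrite (walk_verts_rcons (path_walk H)).
by rewrite rcons_uniq => /andP[].
Qed.

Lemma path_end_notin_srcs x es : is_path src tgt x es ->
  walk_end tgt x es \notin map src es.
Proof.
move=> H; have := path_uniq H; rewrite (walk_verts_rcons (path_walk H)).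
by rewrite rcons_uniq => /andP[].
Qed.

Lemma walk_verts_split x es v : is_walk src tgt x es ->
  v \in walk_verts tgt x es -> v = walk_end tgt x es \/ v \in map src es.
Proof.
move=> H; rewrite (walk_verts_rcons H) mem_rcons inE.
by case/orP=> [/eqP->|->]; [left|right].
Qed.

Lemma srcs_in_verts x es v : is_walk src tgt x es ->
  v \in map src es -> v \in walk_verts tgt x es.
Proof. by move=> H Hv; rewrite (walk_verts_rcons H) mem_rcons inE Hv orbT. Qed.

Lemma src_in_verts x es e : is_walk src tgt x es ->
  e \in es -> src e \in walk_verts tgt x es.
Proof. by move=> H He; apply: (srcs_in_verts H); apply: map_f. Qed.

Lemma tgt_in_verts x es e : e \in es -> tgt e \in walk_verts tgt x es.
Proof. by move=> He; rewrite /walk_verts inE (map_f tgt He) orbT. Qed.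

Lemma end_in_verts x es : walk_end tgt x es \in walk_verts tgt x es.
Proof. by rewrite /walk_verts /walk_end mem_last. Qed.

Lemma start_in_verts x es : x \in walk_verts tgt x es.
Proof. by rewrite /walk_verts inE eqxx. Qed.

Lemma path_tgt_neq x es e : is_path src tgt x es -> e \in es -> tgt e != x.
Proof.
move=> H He; have := path_uniq H; rewrite /walk_verts /= => /andP[Hx _].
by apply/eqP=> E'; move: Hx; rewrite -E' (map_f tgt He).
Qed.

Lemma path_src_inj x es : is_path src tgt x es -> {in es &, injective src}.
Proof. move=> H; apply: uniq_map_inj; exact: path_srcs_uniq H. Qed.

Lemma path_tgt_inj x es : is_path src tgt x es -> {in es &, injective tgt}.
Proof.
move=> H; apply: uniq_map_inj; have := path_uniq H; by rewrite /walk_verts /= => /andP[].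
Qed.

Lemma path_size x es : is_path src tgt x es -> (size es < #|V|)%N.
Proof.
move=> H; have := path_uniq H => /card_uniqP; rewrite /walk_verts /= size_map => <-.
exact: max_card.
Qed.

Variable R : realType.

Lemma walk_telescope (pi : V -> R) x es : is_walk src tgt x es ->
  \sum_(e <- es) (pi (src e) - pi (tgt e)) = pi x - pi (walk_end tgt x es).
Proof.
elim: es x => [|e es IH] x /=; first by rewrite big_nil subrr.
case/andP=> /eqP Hs H; rewrite big_cons (IH _ H) Hs /walk_end /=.
by rewrite addrA subrK.
Qed.

End Walks.
Section Orbit.
Variables (V : finType) (D : {set V}) (g : V -> V).
Hypothesis ginj : {in D &, injective g}.

Definition orb x k := iter k g x.

Lemma orbS x k : orb x k.+1 = g (orb x k).
Proof. by []. Qed.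

Lemma orb_disj x y a b : x \notin g @: D -> y \notin g @: D ->
  (forall t, (t < a)%N -> orb x t \in D) -> (forall t, (t < b)%N -> orb y t \in D) ->
  orb x a = orb y b -> x = y /\ a = b.
Proof.
move=> Hx Hy.
elim: a b => [|a IH] [|b] Ha Hb /=.
- by move=> ->.
- move=> E; exfalso; move/negP: Hx; apply; rewrite /orb in E; rewrite E.
  by apply: imset_f; apply: Hb.
- move=> E; exfalso; move/negP: Hy; apply; rewrite /orb in E; rewrite -E.
  by apply: imset_f; apply: Ha.
- move=> E; have E' : orb x a = orb y b.
    by apply: ginj => //; [apply: Ha | apply: Hb].
  have [-> ->] := IH b (fun t Ht => Ha t (ltnW Ht)) (fun t Ht => Hb t (ltnW Ht)) E'.
  by [].
Qed.

Lemma orb_distinct x m : x \notin g @: D ->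
  (forall t, (t < m)%N -> orb x t \in D) ->
  forall a b, (a <= m)%N -> (b <= m)%N -> orb x a = orb x b -> a = b.
Proof.
move=> Hx Hm a b Ha Hb E.
have Ha' : forall t, (t < a)%N -> orb x t \in D.
  by move=> t Ht; apply: Hm; apply: leq_trans Ht Ha.
have Hb' : forall t, (t < b)%N -> orb x t \in D.
  by move=> t Ht; apply: Hm; apply: leq_trans Ht Hb.
by case: (orb_disj Hx Hx Ha' Hb' E).
Qed.

Lemma orb_bound x m : x \notin g @: D ->
  (forall t, (t < m)%N -> orb x t \in D) -> (m < #|V|)%N.
Proof.
move=> Hx Hm; rewrite ltnNge; apply/negP => Hle.
have Hinj : injective (fun k : 'I_(#|V|.+1) => orb x k).
  move=> k1 k2 E; apply: val_inj => /=.
  apply: (orb_distinct Hx Hm) E.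
  - by apply: leq_trans Hle; rewrite -ltnS.
  - by apply: leq_trans Hle; rewrite -ltnS.
have := leq_card _ Hinj; rewrite card_ord ltnn //.
Qed.

Lemma orb_exit x : x \notin g @: D ->
  exists m, [/\ (m < #|V|)%N, orb x m \notin D & forall t, (t < m)%N -> orb x t \in D].
Proof.
move=> Hx.
have Hex : exists k, (fun k => orb x k \notin D) k.
  case: (boolP [exists k : 'I_(#|V|.+1), orb x k \notin D]).
    by case/existsP=> k Hk; exists k.
  move/existsPn=> Hall; exfalso.
  have Hm : forall t, (t < #|V|.+1)%N -> orb x t \in D.
    by move=> t Ht; have := Hall (Ordinal Ht); rewrite negbK.
  by have := orb_bound Hx Hm; rewrite ltnNge leqnSn.
case: (ex_minnP Hex) => m Hm Hmin.
have Hlt : forall t, (t < m)%N -> orb x t \in D.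
  move=> t Ht; apply/negPn/negP => Hn.
  by have := Hmin t Hn; rewrite leqNgt Ht.
by exists m; split => //; apply: orb_bound Hx Hlt.
Qed.
End Orbit.
Section Routing.
Variables (V E : finType) (src tgt : E -> V) (R : realType) (w : E -> R).

Definition nxt (f : V -> option E) v := if f v is Some e then tgt e else v.
Definition ow (c : option E) : R := if c is Some e then w e else 0.
Definition valid (D : {set V}) (f : V -> option E) :=
  forall v, v \in D -> if f v is Some e then src e == v else true.
Definition routing (D U : {set V}) (f : V -> option E) :=
  [/\ valid D f, {in D &, injective (nxt f)} &
      forall u, (u \in nxt f @: D) = (u \notin U)].
Definition rweight (D : {set V}) (f : V -> option E) := \sum_(v in D) ow (f v).

Lemma exchange (D1 D2 U1 U2 : {set V}) (f1 f2 : V -> option E) (a : V) : D2 \subset D1 ->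
  routing D1 U1 f1 -> routing D2 U2 f2 -> a \in U1 -> a \notin U2 ->
  exists b g1 g2, [/\ b \in U2, b \notin U1, routing D1 (b |: (U1 :\ a)) g1,
     routing D2 (a |: (U2 :\ b)) g2 &
     rweight D1 g1 + rweight D2 g2 = rweight D1 f1 + rweight D2 f2].
Proof.
move=> sD [val1 inj1 im1] [val2 inj2 im2] aU1 aU2.
set n1 := nxt f1 in inj1 im1; set n2 := nxt f2 in inj2 im2.
have D21 : forall v : V, v \in D2 -> v \in D1.
  by move=> v Hv; exact: (fintype.subsetP sD v Hv).
set Dh := n2 @: D2.
pose inv2 u := odflt u [pick v in D2 | n2 v == u].
have inv2P : forall u, u \in Dh -> inv2 u \in D2 /\ n2 (inv2 u) = u.
  move=> u Hu; rewrite /inv2; case: pickP => [v /andP[Hv /eqP Hn]|Hnone] //=.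
  by exfalso; case/imsetP: Hu => v Hv Ev; have := Hnone v; rewrite Hv -Ev eqxx.
pose h u := n1 (inv2 u).
have hinj : {in Dh &, injective h}.
  move=> u u' Hu Hu' E'; have [Hi Hn] := inv2P u Hu; have [Hi' Hn'] := inv2P u' Hu'.
  by rewrite -Hn -Hn'; congr n2; apply: inj1 => //; apply: D21.
have F0 : a \notin n1 @: D1 by rewrite im1 aU1.
have aDh : a \notin h @: Dh.
  apply/negP => /imsetP[u Hu Eu]; move/negP: F0; apply; rewrite Eu.
  by apply: imset_f; apply: D21; case: (inv2P u Hu).
have [m [_ Hm Hlt]] := orb_exit hinj aDh.
pose uu k := orb h a k.
pose l k := inv2 (uu k).
have F1 : forall k, (k < m)%N ->
   [/\ l k \in D2, l k \in D1, n2 (l k) = uu k & n1 (l k) = uu k.+1].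
  move=> k Hk; have [Hi Hn] := inv2P _ (Hlt k Hk).
  by split => //; apply: D21.
have DhE : forall u, (u \in Dh) = (u \notin U2) by move=> u; rewrite /Dh im2.
have aDh' : a \in Dh by rewrite DhE.
have m0 : (0 < m)%N.
  by case: m Hm {Hlt F1} => //; rewrite /orb /= aDh'.
set b := uu m.
have bU2 : b \in U2 by rewrite -[b \in U2]negbK -DhE.
have F2 : forall k, (0 < k <= m)%N -> uu k \in n1 @: D1.
  case=> [//|k] /= Hk; have [_ Hd _ Hn] := F1 k Hk.
  by apply/imsetP; exists (l k) => //; exact: esym Hn.
have bU1 : b \notin U1 by rewrite -im1; apply: F2; rewrite m0 leqnn.
set L := [set l (nat_of_ord k) | k : 'I_m].
have memL : forall v, reflect (exists2 k, (k < m)%N & v = l k) (v \in L).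
  move=> v; apply: (iffP imsetP) => [[k _ ->]|[k Hk ->]].
    by exists k.
  by exists (Ordinal Hk).
have lL : forall k, (k < m)%N -> l k \in L by move=> k Hk; apply/memL; exists k.
have LD2 : forall v, v \in L -> v \in D2.
  by move=> v /memL[k Hk ->]; case: (F1 k Hk).
pose g1 v := if v \in L then f2 v else f1 v.
pose g2 v := if v \in L then f1 v else f2 v.
have ng1 : forall v, nxt g1 v = if v \in L then n2 v else n1 v.
  by move=> v; rewrite /nxt /g1; case: (v \in L).
have ng2 : forall v, nxt g2 v = if v \in L then n1 v else n2 v.
  by move=> v; rewrite /nxt /g2; case: (v \in L).
have notU1 : forall u, u \in n1 @: D1 -> u \notin U1 by move=> u; rewrite im1.
have Hm1 : (m.-1 < m)%N by rewrite ltn_predL.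
have Fm : l m.-1 \in D2 /\ n1 (l m.-1) = b.
  have [Hd _ _ Hn] := F1 m.-1 Hm1; by rewrite (prednK m0) in Hn.
have bn1 : forall v, v \in D1 -> n1 v = b -> v \in L.
  move=> v Hv Ev; have [Hd Hn] := Fm.
  have -> : v = l m.-1 by apply: inj1 => //; [exact: D21 | rewrite Ev Hn].
  exact: lL.
have cross1 : forall k v', (k < m)%N -> v' \in D1 -> v' \notin L -> uu k != n1 v'.
  move=> [|k] v' Hk Hv' HL; apply/eqP => E'.
    by move/negP: F0; apply; change a with (uu 0); rewrite E'; apply: imset_f.
  have [_ Hd _ Hn] := F1 k (ltnW Hk).
  have Ev' : l k = v' by apply: inj1 => //; rewrite Hn E'.
  by move: HL; rewrite -Ev' lL // ltnW.
have cross2 : forall k v', (k < m)%N -> v' \in D2 -> v' \notin L -> uu k.+1 != n2 v'.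
  move=> k v' Hk Hv' HL; apply/eqP => E'.
  case: (ltnP k.+1 m) => Hk1.
    have [Hd _ Hn _] := F1 k.+1 Hk1.
    have Ev' : l k.+1 = v' by apply: inj2 => //; rewrite Hn E'.
    by move: HL; rewrite -Ev' lL.
  have Ekm : k.+1 = m by apply/eqP; rewrite eqn_leq Hk1 Hk.
  move/negP: Hm; apply; rewrite -/(uu m) -Ekm E'; exact: imset_f.
exists b, g1, g2; split => //.
- split.
  + move=> v Hv; rewrite /g1; case: ifP => HL; [exact: val2 (LD2 v HL) | exact: val1 v Hv].
  + move=> v v' Hv Hv'; rewrite !ng1.
    case: ifP => HL; case: ifP => HL'.
    * by apply: inj2; apply: LD2.
    * case/memL: HL => k Hk Ev; have [_ _ Hn2 _] := F1 k Hk.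
      by rewrite Ev Hn2 => E'; move: (cross1 k v' Hk Hv'); rewrite HL' E' eqxx => /(_ isT).
    * case/memL: HL' => k Hk Ev; have [_ _ Hn2 _] := F1 k Hk.
      by rewrite Ev Hn2 => E'; move: (cross1 k v Hk Hv); rewrite HL E' eqxx => /(_ isT).
    * by apply: inj1.
  + move=> u; rewrite !inE; apply/idP/idP.
    * case/imsetP => v Hv ->; rewrite ng1; case: ifP => HL.
        case/memL: HL => k Hk ->; have [_ _ Hn2 _] := F1 k Hk; rewrite Hn2.
        apply/negP => /orP[/eqP Eb | /andP[Ha HU]].
          by move: (Hlt k Hk) Hm; rewrite -/(uu k) -/(uu m) -/b Eb => ->.
        case: k Hk Hn2 Ha HU => [|k] Hk Hn2 Ha HU.
          by move: Ha; rewrite eqxx.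
        by move: HU; apply/negP; apply: notU1; apply: F2; rewrite /= ltnW.
      rewrite (negbTE (notU1 _ (imset_f _ Hv))) andbF orbF.
      by apply/eqP => Eb; move: HL; rewrite (bn1 v Hv Eb).
    * rewrite negb_or negb_and negbK => /andP[Hub /orP[/eqP-> | HU]].
        apply/imsetP; exists (l 0); first by case: (F1 0 m0).
        by rewrite ng1 lL //; case: (F1 0 m0) => _ _ -> _.
      rewrite -im1 in HU; case/imsetP: HU Hub => v Hv -> Hub.
      case: (boolP (v \in L)) => HL.
        case/memL: HL Hub => k Hk -> Hub; have [_ _ _ Hn] := F1 k Hk; rewrite Hn in Hub *.
        have Hk1 : (k.+1 < m)%N.
          by rewrite ltn_neqAle Hk andbT; apply: contra Hub => /eqP ->.
        apply/imsetP; exists (l k.+1); first by case: (F1 _ Hk1).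
        by rewrite ng1 lL //; case: (F1 _ Hk1) => _ _ -> _.
      by apply/imsetP; exists v => //; rewrite ng1 (negbTE HL).
- split.
  + move=> v Hv; rewrite /g2; case: ifP => HL; [exact: val1 v (D21 v Hv) | exact: val2 v Hv].
  + move=> v v' Hv Hv'; rewrite !ng2.
    case: ifP => HL; case: ifP => HL'.
    * by apply: inj1; apply: D21; apply: LD2.
    * case/memL: HL => k Hk Ev; have [_ _ _ Hn] := F1 k Hk.
      by rewrite Ev Hn => E'; move: (cross2 k v' Hk Hv'); rewrite HL' E' eqxx => /(_ isT).
    * case/memL: HL' => k Hk Ev; have [_ _ _ Hn] := F1 k Hk.
      by rewrite Ev Hn => E'; move: (cross2 k v Hk Hv); rewrite HL E' eqxx => /(_ isT).
    * by apply: inj2.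
  + move=> u; rewrite !inE; apply/idP/idP.
    * case/imsetP => v Hv ->; rewrite ng2; case: ifP => HL.
        case/memL: HL => k Hk ->; have [_ _ _ Hn] := F1 k Hk; rewrite Hn.
        have Hna : uu k.+1 != a.
          by apply/eqP => Ea; move/negP: F0; apply; rewrite -Ea; apply: F2; rewrite /= Hk.
        rewrite (negbTE Hna) /=.
        case: (ltnP k.+1 m) => Hk1.
          have HU : uu k.+1 \notin U2 by rewrite -DhE; apply: Hlt.
          by rewrite (negbTE HU) andbF.
        have Ekm : k.+1 = m by apply/eqP; rewrite eqn_leq Hk1 Hk.
        change (~~ ((uu k.+1 != b) && (uu k.+1 \in U2))).
        by rewrite Ekm -/b eqxx.
      have HU : n2 v \notin U2 by rewrite -im2; apply: imset_f.
      rewrite (negbTE HU) andbF orbF.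
      apply/eqP => Ea; have [Hd _ Hn2 _] := F1 0 m0.
      have Ev : l 0 = v by apply: inj2 => //; rewrite Hn2 Ea.
      by move: HL; rewrite -Ev lL.
    * rewrite negb_or negb_and negbK => /andP[Hua /orP[/eqP-> | HU]].
        have [Hd Hn] := Fm.
        apply/imsetP; exists (l m.-1) => //.
        by rewrite ng2 lL // Hn.
      rewrite -im2 in HU; case/imsetP: HU Hua => v Hv -> Hua.
      case: (boolP (v \in L)) => HL.
        case/memL: HL Hua => [[|k]] Hk -> Hua; have [_ _ Hn2 _] := F1 _ Hk; rewrite Hn2 in Hua *.
          by move: Hua; rewrite eqxx.
        apply/imsetP; exists (l k); first by case: (F1 _ (ltnW Hk)).
        by rewrite ng2 lL ?(ltnW Hk) //; case: (F1 _ (ltnW Hk)) => _ _ _ ->.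
      by apply/imsetP; exists v => //; rewrite ng2 (negbTE HL).
- have split1 : forall (g : V -> option E) D, rweight D g =
     \sum_(v in D | v \in L) ow (g v) + \sum_(v in D | v \notin L) ow (g v).
    by move=> g D; rewrite /rweight (bigID (fun v => v \in L)).
  have eqDL : forall F : V -> R, \sum_(v in D1 | v \in L) F v = \sum_(v in D2 | v \in L) F v.
    move=> F; apply: eq_bigl => v; case: (boolP (v \in L)) => HL.
      by rewrite !andbT (D21 _ (LD2 _ HL)) (LD2 _ HL).
    by rewrite !andbF.
  rewrite !split1.
  have e1 : \sum_(v in D1 | v \in L) ow (g1 v) = \sum_(v in D1 | v \in L) ow (f2 v).
    by apply: eq_bigr => v /andP[_ HL]; rewrite /g1 HL.
  have e2 : \sum_(v in D1 | v \notin L) ow (g1 v) = \sum_(v in D1 | v \notin L) ow (f1 v).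
    by apply: eq_bigr => v /andP[_ HL]; rewrite /g1 (negbTE HL).
  have e3 : \sum_(v in D2 | v \in L) ow (g2 v) = \sum_(v in D2 | v \in L) ow (f1 v).
    by apply: eq_bigr => v /andP[_ HL]; rewrite /g2 HL.
  have e4 : \sum_(v in D2 | v \notin L) ow (g2 v) = \sum_(v in D2 | v \notin L) ow (f2 v).
    by apply: eq_bigr => v /andP[_ HL]; rewrite /g2 (negbTE HL).
  rewrite e1 e2 e3 e4 !eqDL.
  lra.
Qed.
End Routing.
Section Linking.
Variables (V E : finType) (src tgt : E -> V) (R : realType) (w : E -> R).
Variables (n : nat) (iota : 'I_n -> V).

Section Fam.
Variables (I : {set 'I_n}) (P : 'I_n -> seq E).
Hypothesis Hpath : forall i, i \in I -> is_path src tgt (iota i) (P i).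
Hypothesis Hdisj : forall i i', i \in I -> i' \in I -> i != i' ->
  [disjoint walk_verts tgt (iota i) (P i) & walk_verts tgt (iota i') (P i')].

Lemma same_path i i' v : i \in I -> i' \in I ->
  v \in walk_verts tgt (iota i) (P i) -> v \in walk_verts tgt (iota i') (P i') -> i = i'.
Proof.
move=> Hi Hi' Hv Hv'; case: (eqVneq i i') => // Hne.
by have := disjointFr (Hdisj Hi Hi' Hne) Hv; rewrite Hv'.
Qed.

Lemma sum_paths (D : {set V}) (F : V -> R) :
  (forall i e, i \in I -> e \in P i -> src e \in D) ->
  \sum_(i in I) \sum_(e <- P i) F (src e) =
  \sum_(v in D) (if [exists i in I, v \in map src (P i)] then F v else 0).
Proof.
move=> HD.
have step : forall i, i \in I -> \sum_(e <- P i) F (src e) =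
    \sum_(v in D) (if v \in map src (P i) then F v else 0).
  move=> i Hi; rewrite -(big_map src xpredT F) (big_uniq _ (path_srcs_uniq (Hpath Hi))).
  rewrite big_mkcond [RHS]big_mkcond; apply: eq_bigr => v _.
  case: (boolP (v \in map src (P i))) => Hv; last by case: (v \in D).
  by case/mapP: Hv => e He ->; rewrite (HD i e Hi He).
rewrite (eq_bigr _ step) exchange_big; apply: eq_bigr => v Hv.
case: existsP => [[i /andP[Hi Hvi]]|Hn].
  rewrite (bigD1 i Hi) /= Hvi big1 => [|i' /andP[Hi' Hne]]; first by rewrite addr0.
  case: ifP => // Hvi'; exfalso; move/negP: Hne; apply; apply/eqP.
  exact: (same_path Hi' Hi (srcs_in_verts (path_walk (Hpath Hi')) Hvi')
                           (srcs_in_verts (path_walk (Hpath Hi)) Hvi)).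
rewrite big1 // => i Hi; case: ifP => // Hvi; exfalso; apply: Hn; exists i.
by rewrite Hi Hvi.
Qed.

End Fam.

Section LinkA.
Variables (I : {set 'I_n}) (J : {set V}) (P : 'I_n -> seq E).
Hypothesis Hl : is_linking src tgt iota I J P.

Local Notation vs i := (walk_verts tgt (iota i) (P i)).
Local Notation en i := (walk_end tgt (iota i) (P i)).

Lemma lk_path i : i \in I -> is_path src tgt (iota i) (P i).
Proof. by case: Hl => _ Hp _ Hi; case/andP: (Hp i Hi). Qed.

Lemma lk_end i : i \in I -> en i \in J.
Proof. by case: Hl => _ Hp _ Hi; case/andP: (Hp i Hi). Qed.

Lemma lk_disj : forall i i', i \in I -> i' \in I -> i != i' ->
  [disjoint walk_verts tgt (iota i) (P i) & walk_verts tgt (iota i') (P i')].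
Proof. by case: Hl. Qed.

Lemma lk_ends j : j \in J -> exists2 i, i \in I & en i = j.
Proof.
move=> Hj; case: Hl => Hcard _ _.
have inj : {in I &, injective (fun i => en i)}.
  move=> i i' Hi Hi' E'; apply: (same_path lk_disj Hi Hi' (end_in_verts _ _ _)).
  by rewrite E'; apply: end_in_verts.
have sub : (fun i => en i) @: I \subset J.
  by apply/fintype.subsetP => _ /imsetP[i Hi ->]; apply: lk_end.
have eqJ : (fun i => en i) @: I =i J.
  by apply/subset_cardP => //; rewrite card_in_imset.
by move: Hj; rewrite -eqJ => /imsetP[i Hi ->]; exists i.
Qed.

Lemma lk_interior i v : i \in I -> v \in vs i -> v \in J -> v = en i.
Proof.
move=> Hi Hv HJ; have [i' Hi' Ei'] := lk_ends HJ.
have E' : i' = i.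
  by apply: (same_path lk_disj Hi' Hi _ Hv); rewrite -Ei'; apply: end_in_verts.
by rewrite -Ei' E'.
Qed.

Definition fa v := [pick e | (src e == v) && [exists i in I, e \in P i]].

Lemma faP i e : i \in I -> e \in P i -> fa (src e) = Some e.
Proof.
move=> Hi He; rewrite /fa; case: pickP => [e' /andP[/eqP Hs /existsP[i' /andP[Hi' He']]]|Hn].
  have Ei : i' = i.
    apply: (same_path lk_disj Hi' Hi (src_in_verts (path_walk (lk_path Hi')) He')).
    by rewrite Hs; apply: (src_in_verts (path_walk (lk_path Hi)) He).
  subst i'; congr Some; exact: (path_src_inj (lk_path Hi)).
by have := Hn e; rewrite eqxx /=; move/existsP => []; exists i; rewrite Hi He.
Qed.

Lemma faS v e : fa v = Some e -> src e = v /\ exists2 i, i \in I & e \in P i.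
Proof.
rewrite /fa; case: pickP => // e' /andP[/eqP Hs /existsP[i /andP[Hi He]]] [<-].
by split => //; exists i.
Qed.

Lemma faN v : fa v = None -> forall i, i \in I -> v \notin map src (P i).
Proof.
move=> Hn i Hi; apply/negP => /mapP[e He Ev].
by move: Hn; rewrite Ev (faP Hi He).
Qed.

Lemma link_routing : routing src tgt (~: J) (iota @: I) fa /\
  rweight w (~: J) fa = linking_weight w I P.
Proof.
have nJ : forall i v, i \in I -> v \in vs i -> v \notin J -> v \in map src (P i).
  move=> i v Hi Hv HJ; case: (walk_verts_split (path_walk (lk_path Hi)) Hv) => // Ev.
  by move: HJ; rewrite Ev lk_end.
split; first split.
- move=> v _; case E': (fa v) => [e|] //; by have [-> _] := faS E'.
- move=> v v'; rewrite !inE => Hv Hv'; rewrite /nxt.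
  case E1: (fa v) => [e|]; case E2: (fa v') => [e'|].
  + have [Hs [i Hi He]] := faS E1; have [Hs' [i' Hi' He']] := faS E2.
    move=> Et; have Ei : i = i'.
      by apply: (same_path lk_disj Hi Hi' (tgt_in_verts tgt (iota i) He)); rewrite Et; apply: tgt_in_verts.
    subst i'; have Ee : e = e' by apply: (path_tgt_inj (lk_path Hi)).
    by rewrite -Hs -Hs' Ee.
  + have [Hs [i Hi He]] := faS E1 => Et.
    have := faN E2 Hi; rewrite (nJ i v' Hi) //; rewrite -Et; exact: tgt_in_verts.
  + have [Hs [i Hi He]] := faS E2 => Et.
    have := faN E1 Hi; rewrite (nJ i v Hi) //; rewrite Et; exact: tgt_in_verts.
  + by [].
- move=> u; apply/idP/idP.
  + case/imsetP => v; rewrite inE => Hv ->; rewrite /nxt.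
    case E1: (fa v) => [e|].
      have [Hs [i Hi He]] := faS E1.
      apply/imsetP => -[i' Hi' Ei'].
      have Ei : i = i'.
        apply: (same_path lk_disj Hi Hi' (tgt_in_verts tgt (iota i) He)); rewrite Ei'.
        exact: start_in_verts.
      subst i'; by move: (path_tgt_neq (lk_path Hi) He); rewrite Ei' eqxx.
    apply/imsetP => -[i Hi Ei].
    have := faN E1 Hi; rewrite (nJ i v Hi) // Ei; exact: start_in_verts.
  + move=> Hu.
    case: (boolP [exists i in I, u \in vs i]) => [/existsP[i /andP[Hi Hui]]|Hn].
      have Hux : u != iota i by apply: contra Hu => /eqP->; apply: imset_f.
      move: Hui; rewrite /walk_verts inE (negbTE Hux) /= => /mapP[e He Eu].
      have Hsrc : src e \notin J.
        apply/negP => HJ.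
        have := lk_interior Hi (src_in_verts (path_walk (lk_path Hi)) He) HJ.
        move=> Ee; move: (path_end_notin_srcs (lk_path Hi)).
        by rewrite -Ee (map_f src He).
      apply/imsetP; exists (src e); first by rewrite inE.
      by rewrite /nxt (faP Hi He) Eu.
    have HuJ : u \notin J.
      apply/negP => HJ; have [i Hi Ei] := lk_ends HJ; move/existsP: Hn; apply.
      by exists i; rewrite Hi -Ei end_in_verts.
    have Hf : fa u = None.
      case E1: (fa u) => [e|] //; have [Hs [i Hi He]] := faS E1.
      exfalso; move/existsP: Hn; apply; exists i; rewrite Hi /=.
      by rewrite -Hs; apply: (src_in_verts (path_walk (lk_path Hi)) He).
    by apply/imsetP; exists u; rewrite ?inE // /nxt Hf.
- rewrite /linking_weight /rweight /walk_weight.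
  have -> : \sum_(i in I) \sum_(e <- P i) w e = \sum_(i in I) \sum_(e <- P i) ow w (fa (src e)).
    apply: eq_bigr => i Hi; apply: eq_big_seq => e He; by rewrite (faP Hi He).
  rewrite (sum_paths lk_path lk_disj (D := ~: J) (fun v => ow w (fa v))).
    apply: eq_bigr => v Hv; case: ifP => // Hn.
    case E1: (fa v) => [e|] //; have [Hs [i Hi He]] := faS E1.
    exfalso; move/negbT/negP: Hn; apply; apply/existsP; exists i; rewrite Hi /= -Hs.
    exact: map_f.
  move=> i e Hi He; rewrite inE; apply/negP => HJ.
  have := lk_interior Hi (src_in_verts (path_walk (lk_path Hi)) He) HJ.
  move=> Ee; move: (path_end_notin_srcs (lk_path Hi)).
  by rewrite -Ee (map_f src He).
Qed.

End LinkA.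
End Linking.
Section Potential.
Variables (V E : finType) (src tgt : E -> V) (R : realType) (w : E -> R).
Hypothesis Hnc : no_negative_cycle src tgt w.

Lemma walk_cat x p1 p2 : is_walk src tgt x (p1 ++ p2) =
  is_walk src tgt x p1 && is_walk src tgt (walk_end tgt x p1) p2.
Proof.
elim: p1 x => [|e p1 IH] x //=; by rewrite IH andbA.
Qed.

Lemma walk_end_cat x p1 p2 : walk_end tgt x (p1 ++ p2) = walk_end tgt (walk_end tgt x p1) p2.
Proof. by rewrite /walk_end map_cat last_cat. Qed.

Lemma verts_cat x p1 p2 : walk_verts tgt x (p1 ++ p2) = walk_verts tgt x p1 ++ map tgt p2.
Proof. by rewrite /walk_verts map_cat. Qed.

Lemma weight_cat p1 p2 : walk_weight w (p1 ++ p2) = walk_weight w p1 + walk_weight w p2.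
Proof. by rewrite /walk_weight big_cat. Qed.

Lemma verts_split_cat x p v : v \in walk_verts tgt x p ->
  exists p1 p2, p = p1 ++ p2 /\ walk_end tgt x p1 = v.
Proof.
elim: p x => [|e p IH] x; rewrite /walk_verts /= inE.
  by move/eqP->; exists [::], [::].
case/orP=> [/eqP->|Hv]; first by exists [::], (e :: p).
have [p1 [p2 [-> Ev]]] := IH (tgt e) Hv.
by exists (e :: p1), p2; split.
Qed.

Fixpoint seqs (k : nat) : seq (seq E) :=
  if k is k'.+1 then [::] :: [seq e :: s | e <- enum E, s <- seqs k'] else [:: [::]].

Lemma mem_seqs k s : (size s <= k)%N -> s \in seqs k.
Proof.
elim: k s => [|k IH] [|e s] //= H; rewrite ?inE //.
apply/orP; right; apply/allpairsP; exists (e, s); split => //.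
  by rewrite mem_enum.
exact: IH.
Qed.

Lemma seq_argmin (T : eqType) (cs : seq T) (P : pred T) (F : T -> R) :
  has P cs -> exists c, [/\ c \in cs, P c & forall c', c' \in cs -> P c' -> F c <= F c'].
Proof.
elim: cs => [//|a cs IH] /=.
case Pa: (P a) => /= Hh.
  case: (boolP (has P cs)) => Hc.
    have [c [Hc1 Pc Hmin]] := IH Hc.
    case: (leP (F a) (F c)) => H.
      exists a; split => //; first by rewrite inE eqxx.
      move=> c'; rewrite inE => /orP[/eqP-> //|Hc'] Pc'.
      by apply: le_trans H _; apply: Hmin.
    exists c; split => //; first by rewrite inE Hc1 orbT.
    move=> c'; rewrite inE => /orP[/eqP-> _|Hc'] ; last exact: Hmin.
    exact: ltW.
  exists a; split => //; first by rewrite inE eqxx.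
  move=> c'; rewrite inE => /orP[/eqP-> //|Hc'] Pc'.
  by exfalso; move/hasPn: Hc => /(_ c' Hc'); rewrite Pc'.
have [c [Hc1 Pc Hmin]] := IH Hh.
exists c; split => //; first by rewrite inE Hc1 orbT.
move=> c'; rewrite inE => /orP[/eqP-> |Hc'] Pc'; last exact: Hmin.
by move: Pc'; rewrite Pa.
Qed.

Lemma exists_potential : exists pi : V -> R, forall e, pi (tgt e) <= pi (src e) + w e.
Proof.
pose allc := [seq (x, s) | x <- enum V, s <- seqs #|V|].
have Hmin : forall v, exists c : V * seq E,
   [/\ is_path src tgt c.1 c.2, walk_end tgt c.1 c.2 = v &
       forall x p, is_path src tgt x p -> walk_end tgt x p = v ->
         walk_weight w c.2 <= walk_weight w p].
  move=> v.
  have inall : forall x p, is_path src tgt x p -> (x, p) \in allc.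
    move=> x p Hp; apply/allpairsP; exists (x, p); split => //.
      by rewrite mem_enum.
    by apply: mem_seqs; apply: ltnW; apply: (path_size Hp).
  pose P := fun c : V * seq E => is_path src tgt c.1 c.2 && (walk_end tgt c.1 c.2 == v).
  have Hh : has P allc.
    apply/hasP; exists (v, [::]); last by rewrite /P /is_path /walk_end /= eqxx.
    by apply: inall; rewrite /is_path.
  have [c [Hc Pc Hm]] := seq_argmin (fun c => walk_weight w c.2) Hh.
  case/andP: Pc => Hp /eqP He.
  exists c; split => // x p Hxp Hxe.
  by apply: (Hm (x, p)); [apply: inall | rewrite /P /= Hxp Hxe eqxx].
pose pi v := walk_weight w (sval (cid (Hmin v))).2.
exists pi => e.
rewrite /pi; case: (cid (Hmin (src e))) => [[x p] [Hp Hend _]] /=.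
case: (cid (Hmin (tgt e))) => [c [_ _ Hm]] /=.
case: (boolP (tgt e \in walk_verts tgt x p)) => Hin.
  have [p1 [p2 [Ep E1]]] := verts_split_cat Hin.
  have Hp1 : is_path src tgt x p1.
    move: Hp; rewrite /is_path Ep walk_cat verts_cat cat_uniq.
    by case/andP=> /andP[-> _] /andP[-> _].
  have Hcyc : is_cycle src tgt (tgt e) (rcons p2 e).
    move: Hp; rewrite /is_path Ep walk_cat verts_cat cat_uniq E1.
    case/andP=> /andP[_ Hw2] /and3P[_ Hdis Hu2].
    rewrite /is_cycle; apply/and4P; split.
    - by case: (p2).
    - rewrite -cats1 walk_cat Hw2 /=.
      by move: Hend; rewrite Ep walk_end_cat E1 => ->; rewrite eqxx.
    - by rewrite /walk_end map_rcons last_rcons.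
    - rewrite map_rcons rcons_uniq Hu2 andbT.
      apply/negP => Ht; move/hasP: Hdis; apply; exists (tgt e) => //.
      by rewrite -E1; apply: end_in_verts.
  have := Hnc Hcyc; rewrite /walk_weight -cats1 big_cat big_seq1 /= => Hc0.
  have := Hm x p1 Hp1 E1; rewrite Ep /= big_cat /walk_weight => H1.
  apply: le_trans H1 _; move: Hc0; rewrite /=; lra.
have Hp' : is_path src tgt x (rcons p e).
  move: Hp; rewrite /is_path -cats1 walk_cat verts_cat cats1 rcons_uniq Hin /=.
  by case/andP=> -> ->; rewrite Hend eqxx.
have Hend' : walk_end tgt x (rcons p e) = tgt e.
  by rewrite /walk_end map_rcons last_rcons.
have := Hm x (rcons p e) Hp' Hend'.
by rewrite /walk_weight -cats1 big_cat big_seq1.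
Qed.

End Potential.
Section LinkB.
Variables (V E : finType) (src tgt : E -> V) (R : realType) (w : E -> R).
Variables (n : nat) (iota : 'I_n -> V).
Hypothesis Hinj : injective iota.
Hypothesis Hnc : no_negative_cycle src tgt w.
Variables (I : {set 'I_n}) (J : {set V}) (f : V -> option E).
Hypothesis Hr : routing src tgt (~: J) (iota @: I) f.

Fixpoint trail (k : nat) (x : V) : seq E :=
  if k is k'.+1 then
    (if x \in J then [::] else if f x is Some e then e :: trail k' (tgt e) else [::])
  else [::].

Let g := nxt tgt f.

Lemma trail_walk k x : is_walk src tgt x (trail k x).
Proof.
case: Hr => Hv _ _.
elim: k x => [|k IH] x //=; case: ifP => // HJ.
case E1: (f x) => [e|] //=; have := Hv x; rewrite inE HJ E1 => /(_ isT) ->.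
exact: IH.
Qed.

Lemma trail_edges k y e : e \in trail k y -> f (src e) = Some e /\ src e \notin J.
Proof.
case: Hr => Hv _ _.
elim: k y => [|k IH] y //=; case: ifP => // HJ.
case E1: (f y) => [e0|] //=; rewrite inE => /orP[/eqP->|He]; last exact: (IH _ He).
by have := Hv y; rewrite inE HJ E1 => /(_ isT) /eqP ->; rewrite E1 HJ.
Qed.

Lemma start_notin i : i \in I -> iota i \notin g @: ~: J.
Proof. by case: Hr => _ _ Him Hi; rewrite /g Him negbK; apply: imset_f. Qed.

Section OneStart.
Variables (x : V) (m : nat).
Hypothesis Hx : x \notin g @: ~: J.
Hypothesis Hm : orb g x m \notin ~: J.
Hypothesis Hlt : forall t, (t < m)%N -> orb g x t \in ~: J.

Lemma trail_spec k t : (t <= m)%N -> (m - t <= k)%N ->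
  walk_verts tgt (orb g x t) (trail k (orb g x t)) = map (orb g x) (index_iota t m.+1) /\
  walk_end tgt (orb g x t) (trail k (orb g x t)) = orb g x m.
Proof.
case: Hr => Hv Hgi _.
elim: k t => [|k IH] t Htm Hk.
  have Et : t = m by apply/eqP; rewrite eqn_leq Htm /= -subn_eq0 -leqn0.
  by subst t; rewrite /index_iota subSn // subnn.
rewrite /=; case: (ltnP t m) => Ht.
  have HJ : orb g x t \notin J by have := Hlt Ht; rewrite inE.
  rewrite (negbTE HJ).
  case E1: (f (orb g x t)) => [e|].
    have Eg : tgt e = orb g x t.+1 by rewrite orbS /g /nxt E1.
    have Hk' : (m - t.+1 <= k)%N by lia.
    have [IH1 IH2] := IH t.+1 Ht Hk'.
    split.
      rewrite /walk_verts /= Eg -/(walk_verts tgt (orb g x t.+1) _) IH1.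
      by rewrite /index_iota subSS subSn // ltnW.
    by rewrite /walk_end /= Eg; exact: IH2.
  exfalso.
  have Eo : orb g x t = orb g x t.+1 by rewrite orbS /g /nxt E1.
  have := orb_distinct Hgi Hx Hlt (ltnW Ht) Ht Eo.
  by move=> /eqP; rewrite eqn_leq ltnn andbF.
have Et : t = m by apply/eqP; rewrite eqn_leq Htm Ht.
subst t; have HJ : orb g x m \in J by move: Hm; rewrite inE negbK.
by rewrite HJ /index_iota subSn // subnn.
Qed.

End OneStart.

Definition Pb i := trail #|V| (iota i).

Lemma Pb_spec i : i \in I -> exists m,
  [/\ (m < #|V|)%N, orb g (iota i) m \in J, (forall t, (t < m)%N -> orb g (iota i) t \in ~: J),
      walk_verts tgt (iota i) (Pb i) = map (orb g (iota i)) (index_iota 0 m.+1) &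
      walk_end tgt (iota i) (Pb i) = orb g (iota i) m].
Proof.
case: Hr => Hv Hgi _ Hi.
have Hx := start_notin Hi.
have [m [Hmv Hm Hlt]] := orb_exit Hgi Hx.
have Hk : (m - 0 <= #|V|)%N by rewrite subn0 ltnW.
have [H1 H2] := trail_spec Hx Hm Hlt (leq0n m) Hk.
exists m; split => //; by move: Hm; rewrite inE negbK.
Qed.

Lemma Pb_linking : is_linking src tgt iota I J Pb.
Proof.
case: Hr => Hv Hgi Him.
split.
- have e1 : #|g @: ~: J| = #|~: J| by rewrite card_in_imset.
  have e2 : g @: (~: J) = ~: (iota @: I) by apply/setP => u; rewrite inE /g Him.
  have e3 : #|iota @: I| = #|I| by rewrite card_imset.
  have := cardsC J; have := cardsC (iota @: I); rewrite -e2 e1 e3.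
  by move=> <- /eqP; rewrite eqn_add2r => /eqP.
- move=> i Hi; have [m [_ HmJ Hlt Hvs He]] := Pb_spec Hi.
  rewrite /is_path trail_walk Hvs He HmJ andbT /index_iota subn0.
  rewrite map_inj_in_uniq ?iota_uniq // => a b; rewrite !mem_iota !add0n.
  by move=> Ha Hb; apply: (orb_distinct Hgi (start_notin Hi) Hlt).
- move=> i i' Hi Hi' Hne; rewrite disjoint_has; apply/hasPn => v Hv1; apply/negP => Hv2.
  have [m [_ _ Hlt Hvs _]] := Pb_spec Hi; have [m' [_ _ Hlt' Hvs' _]] := Pb_spec Hi'.
  move: Hv1 Hv2; rewrite Hvs Hvs' /index_iota !subn0 => /mapP[a Ha ->] /mapP[b Hb Eb].
  move: Ha Hb; rewrite !mem_iota !add0n /= => Ha Hb.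
  have Hlta : forall t, (t < a)%N -> orb g (iota i) t \in ~: J.
    by move=> t Ht; apply: Hlt; apply: leq_trans Ht _.
  have Hltb : forall t, (t < b)%N -> orb g (iota i') t \in ~: J.
    by move=> t Ht; apply: Hlt'; apply: leq_trans Ht _.
  have [E' _] := orb_disj Hgi (start_notin Hi) (start_notin Hi') Hlta Hltb Eb.
  by move: Hne; rewrite (Hinj E') eqxx.
Qed.

Lemma compl_sum (pi : V -> R) (A : {set V}) :
  \sum_(u in ~: A) pi u = \sum_u pi u - \sum_(u in A) pi u.
Proof.
rewrite [\sum_u pi u](bigID (fun u => u \in A)) /=.
have -> : \sum_(u | true && ~~ (u \in A)) pi u = \sum_(u in ~: A) pi u.
  by apply: eq_bigl => u; rewrite inE.
rewrite addrC addrK //.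
Qed.

Lemma Pb_weight : linking_weight w I Pb <= rweight w (~: J) f.
Proof.
have [pi Hpi] := exists_potential Hnc.
have Hl := Pb_linking.
case: Hr => Hv Hgi Him.
pose F v := ow w (f v) + (pi v - pi (g v)).
have F0 : forall v, v \in ~: J -> 0 <= F v.
  move=> v Hvj; rewrite /F /g /nxt; case E1: (f v) => [e|] /=.
    have := Hv v Hvj; rewrite E1 => /eqP <-; have := Hpi e; lra.
  by rewrite subrr addr0.
have HD : forall i e, i \in I -> e \in Pb i -> src e \in ~: J.
  by move=> i e _ He; rewrite inE; case: (trail_edges He).
have Hsum := sum_paths (lk_path Hl) (lk_disj Hl) F HD.
pose en i := walk_end tgt (iota i) (Pb i).
have L1 : \sum_(i in I) \sum_(e <- Pb i) F (src e) =
    linking_weight w I Pb + (\sum_(i in I) pi (iota i) - \sum_(i in I) pi (en i)).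
  have Li : forall i, i \in I -> \sum_(e <- Pb i) F (src e) =
      walk_weight w (Pb i) + (pi (iota i) - pi (en i)).
    move=> i Hi.
    transitivity (\sum_(e <- Pb i) (w e + (pi (src e) - pi (tgt e)))).
      apply: eq_big_seq => e He; have [Hf _] := trail_edges He.
      by rewrite /F Hf /g /nxt Hf.
    by rewrite big_split /= (walk_telescope pi (trail_walk _ _)).
  by rewrite /linking_weight (eq_bigr _ Li) big_split /= sumrB.
have L2 : \sum_(v in ~: J) (if [exists i in I, v \in map src (Pb i)] then F v else 0)
    <= \sum_(v in ~: J) F v.
  apply: ler_sum => v Hvj; case: ifP => _ //; exact: F0.
have L3 : \sum_(v in ~: J) F v = rweight w (~: J) f +
    (\sum_(v in ~: J) pi v - \sum_(u in ~: (iota @: I)) pi u).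
  have -> : \sum_(u in ~: (iota @: I)) pi u = \sum_(v in ~: J) pi (g v).
    rewrite -(big_imset _ Hgi); apply: eq_bigl => u; by rewrite inE -Him.
  by rewrite /F big_split /= sumrB.
have L4 : \sum_(i in I) pi (iota i) = \sum_(u in iota @: I) pi u.
  by rewrite big_imset //; move=> a b _ _; apply: Hinj.
have L5 : \sum_(i in I) pi (en i) = \sum_(u in J) pi u.
  have eqJ : en @: I = J.
    apply/setP => u; apply/imsetP/idP => [[i Hi ->]|Hu].
      by apply: (lk_end Hl).
    by have [i Hi Ei] := lk_ends Hl Hu; exists i.
  rewrite -eqJ big_imset // => i i' Hi Hi' Ee.
  apply: (same_path (lk_disj Hl) Hi Hi' (end_in_verts _ _ _)).
  by rewrite /en in Ee; rewrite Ee; apply: end_in_verts.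
move: Hsum L2; rewrite L1 L3 L4 L5 !compl_sum => Hs HL2; lra.
Qed.

Lemma routing_link : exists P, is_linking src tgt iota I J P /\
  linking_weight w I P <= rweight w (~: J) f.
Proof. exists Pb; split; [exact: Pb_linking | exact: Pb_weight]. Qed.

End LinkB.
Section Main.
Variables (R : realType) (V E : finType) (src tgt : E -> V).
Variables (n : nat) (iota : 'I_n -> V) (w : E -> R).
Hypothesis Hinj : injective iota.
Hypothesis Hnc : no_negative_cycle src tgt w.

Local Notation mu I J := (min_linking_weight src tgt w iota I J).
Local Notation lw I P := (linking_weight w I P).

Lemma routing_ext (D U : {set V}) (f f' : V -> option E) :
  f =1 f' -> routing src tgt D U f -> routing src tgt D U f'.
Proof.
move=> Hf [Hv Hi Him].
have Hn : nxt tgt f =1 nxt tgt f' by move=> v; rewrite /nxt Hf.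
split.
- by move=> v Hv'; rewrite -Hf; apply: Hv.
- by move=> v v' Hv' Hv''; rewrite -!Hn; apply: Hi.
- by move=> u; rewrite -(eq_imset _ Hn) Him.
Qed.

Lemma rweight_ext (D : {set V}) (f f' : V -> option E) :
  f =1 f' -> rweight w D f = rweight w D f'.
Proof. by move=> Hf; apply: eq_bigr => v _; rewrite Hf. Qed.

Lemma opt_link I J : has_linking src tgt iota I J ->
  exists P, is_linking src tgt iota I J P /\
    forall Q, is_linking src tgt iota I J Q -> lw I P <= lw I Q.
Proof.
case=> P0 H0.
have [Hr0 _] := link_routing w H0.
pose ff (f : V -> option E) : {ffun V -> option E} := [ffun v => f v].
have ffE : forall f, ff f =1 f by move=> f v; rewrite ffunE.
pose Pr := fun f : {ffun V -> option E} => `[< routing src tgt (~: J) (iota @: I) f >].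
have Pr0 : Pr (ff (fa src I P0)).
  apply/asboolP; apply: routing_ext Hr0 => v; by rewrite ffE.
case: (arg_minP (fun f : {ffun V -> option E} => rweight w (~: J) f) Pr0) => fm /asboolP Hfm Hmin.
have [P [HP HPw]] := routing_link Hinj Hnc Hfm.
exists P; split => // Q HQ.
have [HrQ HwQ] := link_routing w HQ.
have PrQ : Pr (ff (fa src I Q)).
  apply/asboolP; apply: routing_ext HrQ => v; by rewrite ffE.
apply: le_trans HPw _; rewrite -HwQ -(rweight_ext (~: J) (ffE (fa src I Q))).
exact: Hmin.
Qed.

Lemma mu_opt I J P : is_linking src tgt iota I J P ->
  (forall Q, is_linking src tgt iota I J Q -> lw I P <= lw I Q) ->
  mu I J = (lw I P)%:E.
Proof.
move=> HP Hmin; apply/eqP; rewrite eq_le; apply/andP; split.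
  by apply: ereal_inf_lbound; exists P.
by apply/ereal_infP => y [Q HQ <-]; rewrite lee_fin; apply: Hmin.
Qed.

Lemma mu_none I J : ~ has_linking src tgt iota I J -> mu I J = +oo%E.
Proof.
move=> Hn; apply/eqP; rewrite eq_le leey /=.
by apply/ereal_infP => y [Q HQ _]; exfalso; apply: Hn; exists Q.
Qed.

Lemma mu_cases I J : mu I J = +oo%E \/
  exists P, [/\ is_linking src tgt iota I J P, mu I J = (lw I P)%:E &
    forall Q, is_linking src tgt iota I J Q -> lw I P <= lw I Q].
Proof.
case: (pselect (has_linking src tgt iota I J)) => H.
  have [P [HP Hmin]] := opt_link H; right; exists P; split => //.
  exact: mu_opt.
by left; apply: mu_none.
Qed.

Lemma mu_ninfty I J : mu I J != -oo%E.
Proof. by case: (mu_cases I J) => [->|[P [_ -> _]]]. Qed.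

Lemma core (J1 J2 : {set V}) (S T : {set 'I_n}) : J1 \subset J2 ->
  min_twice_or_infty (T :\: S) (fun t => (mu (t |: S) J1 + mu (T :\ t) J2)%E).
Proof.
move=> HJ.
set F := fun t => (mu (t |: S) J1 + mu (T :\ t) J2)%E.
case: (boolP [exists t in T :\: S, (F t != +oo%E)]) => [/existsP[t0 /andP[Ht0 Ft0]]|Hall].
  right.
  case: (arg_minP F Ht0) => t1 Ht1 Hmin1.
  have Ft1 : F t1 != +oo%E.
    apply: contra Ft0 => /eqP E1; rewrite eq_le leey /= -E1; exact: Hmin1.
  have [H1|[P1 [HP1 E1 Hm1]]] := mu_cases (t1 |: S) J1.
    by move: Ft1; rewrite /F H1 addye ?eqxx // mu_ninfty.
  have [H2|[P2 [HP2 E2 Hm2]]] := mu_cases (T :\ t1) J2.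
    by move: Ft1; rewrite /F H2 addey ?eqxx // mu_ninfty.
  have [Hr1 Hw1] := link_routing w HP1.
  have [Hr2 Hw2] := link_routing w HP2.
  have Ht1' : t1 \in T :\: S := Ht1.
  move: Ht1'; rewrite inE => /andP[t1S t1T].
  have sD : ~: J2 \subset ~: J1 by rewrite finset.setCS.
  have aU1 : iota t1 \in iota @: (t1 |: S) by rewrite mem_imset // setU11.
  have aU2 : iota t1 \notin iota @: (T :\ t1) by rewrite mem_imset // setD11.
  have [b [g1 [g2 [bU2 bU1 Hg1 Hg2 Hw]]]] := exchange w sD Hr1 Hr2 aU1 aU2.
  case/imsetP: bU2 => t2 Ht2 Eb; subst b.
  move: bU1; rewrite mem_imset // => t2n.
  move: Ht2; rewrite !inE => /andP[t21 t2T].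
  move: t2n; rewrite !inE negb_or => /andP[_ t2S].
  have Ht2 : t2 \in T :\: S by rewrite inE t2S t2T.
  have EU1 : iota t2 |: (iota @: (t1 |: S) :\ iota t1) = iota @: (t2 |: S).
    rewrite !imsetU1 setU1K // mem_imset //.
  have EU2 : iota t1 |: (iota @: (T :\ t1) :\ iota t2) = iota @: (T :\ t2).
    apply/setP => u; rewrite !inE.
    case: (boolP (u \in iota @: T)) => HuT.
      case/imsetP: HuT => t Ht ->; rewrite !mem_imset // !inE (inj_eq Hinj).
      case: (eqVneq t t1) => [->|Hne] /=.
        by rewrite eq_sym t21 t1T.
      by rewrite (inj_eq Hinj) Ht !andbT.
    have -> : (u \in iota @: (T :\ t1)) = false.
      by apply/negbTE; apply: contra HuT => /imsetP[t /setD1P[_ Ht] ->]; apply: imset_f.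
    have -> : (u \in iota @: (T :\ t2)) = false.
      by apply/negbTE; apply: contra HuT => /imsetP[t /setD1P[_ Ht] ->]; apply: imset_f.
    rewrite andbF orbF; apply/negbTE; apply: contra HuT => /eqP ->; exact: imset_f.
  rewrite EU1 in Hg1; rewrite EU2 in Hg2.
  have [Q1 [HQ1 HQw1]] := routing_link Hinj Hnc Hg1.
  have [Q2 [HQ2 HQw2]] := routing_link Hinj Hnc Hg2.
  have Ft2 : (F t2 <= F t1)%E.
    rewrite /F E1 E2 -EFinD.
    apply: le_trans (leeD (ereal_inf_lbound _) (ereal_inf_lbound _)) _.
    - by exists Q1.
    - by exists Q2.
    rewrite -EFinD lee_fin -Hw1 -Hw2 -Hw; exact: lerD.
  exists t1, t2; split.
  - exact: Ht1.
  - exact: Ht2.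
  - by rewrite eq_sym.
  - by apply/eqP; rewrite eq_le Ft2 Hmin1.
  - by move=> t Ht; apply: Hmin1.
left => t Ht; apply/eqP; move/existsPn: Hall => /(_ t); rewrite Ht /= negbK.
by [].
Qed.

End Main.

Unset Implicit Arguments.
Set Strict Implicit.

Theorem theorem7p1 (R : realType) (V E : finType) (src tgt : E -> V)
    (n : nat) (iota : 'I_n -> V) (w : E -> R) (s : nat) (S : 'I_s -> {set V}) :
  injective iota ->
  no_negative_cycle src tgt w ->
  (forall j k : 'I_s, (j < k)%N -> S j \subset S k) ->
  (forall j k : 'I_s, (j < k)%N -> (#|S j| < #|S k|)%N) ->
  (forall j : 'I_s, exists I : {set 'I_n}, has_linking src tgt iota I (S j)) ->
  valuated_flag_matroid (fun j : 'I_s => #|S j|)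
    (fun j I => min_linking_weight src tgt w iota I (S j)).
Proof.
move=> Hinj Hnc Hsub _ Hex; split.
  move=> j; split.
    have [I HI] := Hex j; exists I; split.
      by case: HI => P [].
    have [P [HP Hmin]] := opt_link Hinj Hnc HI.
    by rewrite (mu_opt HP Hmin).
  by move=> S0 T0 _ _; apply: core.
by move=> j k Hjk S0 T0 _ _; apply: core => //; apply: Hsub.
Qed.
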